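(* Let $\mathcal H$ be a real Hilbert space, let $f:\mathcal H\to\mathbb R$ be convex and twice continuously differentiable with $\operatorname{argmin}_{\mathcal H} f\neq\emptyset$, let $t_0>0$, $\alpha>3$ and $\beta\ge 0$. Let $u:[t_0,+\infty[\to\mathcal H$ be a classical solution of $$\text{(TOGES-VH)}\quad \dddot u(t)+\frac{\alpha+7}{t}\ddot u(t)+\frac{5(\alpha+1)}{t^2}\dot u(t)+\beta\,\nabla^2 f\Big(u(t)+\tfrac14 t\dot u(t)\Big)\Big(\tfrac54\dot u(t)+\tfrac14 t\ddot u(t)\Big)+\nabla f\Big(u(t)+\tfrac14 t\dot u(t)\Big)=0 .$$ Fix $z\in\operatorname{argmin}_{\mathcal H}f$ and define, for $t\ge t_0$, $$E(t)=4(t^3-2\beta t^2)\Big(f\big(u(t)+\tfrac14 t\dot u(t)\big)-\inf_{\mathcal H}f\Big)+\frac12\Big\|t^2\Big(\ddot u(t)+\beta\nabla f\big(u(t)+\tfrac14 t\dot u(t)\big)\Big)+(\alpha+5)t\dot u(t)+4\alpha(u(t)-z)\Big\|^2 .$$ Let $t_1:=\max\Big\{t_0,\ \frac{2\beta(\alpha-2)}{\alpha-3}\Big\}$ and $F(u(t_1)):=f(u(t_1))-\inf_{\mathcal H}f$. Then: (i) for all $t\ge t_1$, $$f\big(u(t)+\tfrac14 t\dot u(t)\big)-\inf_{\mathcal H} f\le \frac{(\alpha-2)E(t_1)}{4t^3},$$ $$f(u(t))-\inf_{\mathcal H}f\le \big(t_1^4F(u(t_1))-(\alpha-2)E(t_1)\,t_1\big)\frac{1}{t^4}+\frac{(\alpha-2)E(t_1)}{t^3},$$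 and the function $t\mapsto f(u(t))+\frac{(\alpha-2)E(t_1)}{3t^3}$ is nonincreasing on $[t_1,+\infty[$; (ii) if moreover $\beta>0$, then $$\int_{t_1}^{+\infty} t^4\Big\|\nabla f\big(u(t)+\tfrac14 t\dot u(t)\big)\Big\|^2\,dt\le\frac{(\alpha-2)E(t_1)}{\beta}.$$
   Context: $\nabla^2 f(x)\in\mathcal L(\mathcal H,\mathcal H)$ denotes the Hessian of $f$ at $x$, and $\nabla^2 f(x)(\xi)$ its action on $\xi\in\mathcal H$. $\dot u,\ddot u,\dddot u$ are time derivatives of $u$. *)

(* Defs.v *)
From HB Require Import structures.
From mathcomp Require Import all_boot all_order all_algebra.
From mathcomp Require Import all_classical all_reals all_analysis.
Set Implicit Arguments. Unset Strict Implicit. Unset Printing Implicit Defensive.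
Import Order.TTheory GRing.Theory Num.Theory.
Import numFieldNormedType.Exports.
Local Open Scope classical_set_scope.
Local Open Scope ring_scope.

(* A real Hilbert space is modelled as a complete normed space H over R
   together with an inner product ip inducing its norm. *)
Definition is_inner_product (R : realType) (H : normedModType R)
    (ip : H -> H -> R) : Prop :=
  [/\ (forall x y, ip x y = ip y x),
      (forall (a : R) x y z, ip (a *: x + y) z = a * ip x z + ip y z)
    & (forall x, ip x x = `|x| ^+ 2)].

Definition is_gradient (R : realType) (H : normedModType R)
    (ip : H -> H -> R) (f : H -> R) (g : H -> H) : Prop :=
  forall x, differentiable f x /\ (forall h, 'd f x h = ip (g x) h).

Definition hessian (R : realType) (H : normedModType R) (g : H -> H)
    (x : H) (xi : H) : H := 'd g x xi.

Definition C2_with_gradient (R : realType) (H : normedModType R)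
    (ip : H -> H -> R) (f : H -> R) (g : H -> H) : Prop :=
  is_gradient ip f g /\ (forall x, differentiable g x) /\
  (forall x (e : R), 0 < e -> exists2 d : R, 0 < d &
     forall y, `|y - x| < d -> forall h, `|'d g y h - 'd g x h| <= e * `|h|).

Definition convex_fun (R : realType) (H : normedModType R) (f : H -> R) :=
  forall (a : R) (x y : H), 0 <= a -> a <= 1 ->
    f (a *: x + (1 - a) *: y) <= a * f x + (1 - a) * f y.

Definition is_argmin (R : realType) (H : normedModType R) (f : H -> R) (z : H) :=
  forall x, f z <= f x.

Definition inf_f (R : realType) (H : normedModType R) (f : H -> R) : R :=
  inf (range f).

Definition wpt (R : realType) (H : normedModType R) (u : R -> H) (t : R) : H :=
  u t + (t / 4) *: ((derive1 u) t).

(* Classical solution of (TOGES-VH) on [t0, +oo[ : u is C^3 there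
   (u is given on R; only its behaviour on [t0,+oo[ matters) and the
   equation holds at every t >= t0. *)
Definition toges_vh_solution (R : realType) (H : normedModType R)
    (g : H -> H) (alpha beta t0 : R) (u : R -> H) : Prop :=
  forall t, t0 <= t ->
    [/\ derivable u t 1, derivable (derive1 u) t 1, derivable (derive1n 2 u) t 1,
        {for t, continuous (derive1n 3 u)} &
        (derive1n 3 u) t + ((alpha + 7) / t) *: (derive1n 2 u) t
        + ((5 * (alpha + 1)) / t ^+ 2) *: (derive1 u) t
        + beta *: hessian g (wpt u t) ((5 / 4) *: (derive1 u) t + (t / 4) *: (derive1n 2 u) t)
        + g (wpt u t) = 0].

Definition energy (R : realType) (H : normedModType R) (f : H -> R)
    (g : H -> H) (alpha beta : R) (z : H) (u : R -> H) (t : R) : R :=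
  4 * (t ^+ 3 - 2 * beta * t ^+ 2) * (f (wpt u t) - inf_f f)
  + 2^-1 * `| t ^+ 2 *: ((derive1n 2 u) t + beta *: g (wpt u t))
              + ((alpha + 5) * t) *: (derive1 u) t + (4 * alpha) *: (u t - z) | ^+ 2.

(* Main.v *)
Require Import Defs.
From HB Require Import structures.
From mathcomp Require Import all_boot all_order all_algebra.
From mathcomp Require Import all_classical all_reals all_analysis.
From mathcomp Require Import ring lra.
Import Order.TTheory GRing.Theory Num.Theory.
Import numFieldNormedType.Exports.
Local Open Scope classical_set_scope.
Local Open Scope ring_scope.
Set Implicit Arguments. Unset Strict Implicit. Unset Printing Implicit Defensive.


Definition HD {R : realType} {V : normedModType R} (p : R -> V) (t : R) (d : V) :=
  (fun h => h^-1 *: (p (h + t) - p t)) @ 0^' --> d.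

Section HD.
Context {R : realType} {V : normedModType R}.
Implicit Types (p q : R -> V) (t : R) (d dp dq : V).

Lemma HD_is_derive p t d : HD p t d -> is_derive t 1 p d.
Proof.
move=> H.
have E : (fun h : R => h^-1 *: ((p \o shift t) (h *: (1:R)) - p t)) = (fun h => h^-1 *: (p (h + t) - p t)).
  by apply/funext => h /=; rewrite [h *: 1]mulr1.
have dp : derivable p t 1 by rewrite /derivable E; exact: cvgP H.
split => //; rewrite /derive E; exact: cvg_lim H.
Qed.

Lemma is_derive_HD p t d : is_derive t 1 p d -> HD p t d.
Proof.
move=> [dp <-].
have E : (fun h : R => h^-1 *: ((p \o shift t) (h *: (1:R)) - p t)) = (fun h => h^-1 *: (p (h + t) - p t)).
  by apply/funext => h /=; rewrite [h *: 1]mulr1.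
rewrite /HD -E; move: dp; rewrite /derivable /derive => dp.
exact: dp.
Qed.

Lemma derivable_HD p t : derivable p t 1 -> HD p t (derive1 p t).
Proof. by move=> dp; apply: is_derive_HD; rewrite derive1E; exact: derivableP. Qed.

Lemma HD_derive1 p t d : HD p t d -> derive1 p t = d.
Proof. by move=> /HD_is_derive [dp <-]; rewrite derive1E. Qed.

Lemma HD_derivable p t d : HD p t d -> derivable p t 1.
Proof. by move=> /HD_is_derive []. Qed.

Lemma HD_cont p t d : HD p t d -> (fun h => p (h + t)) @ 0^' --> p t.
Proof.
move=> /HD_derivable /derivable1P /derivable1_diffP /differentiable_continuous.
move=> /continuous_withinNx; rewrite scale0r add0r.
by under eq_fun do rewrite [_ *: 1]mulr1.
Qed.

Lemma HD_eqd p t d d' : HD p t d -> d = d' -> HD p t d'.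
Proof. by move=> ? <-. Qed.

Lemma HD_ext p q t d : (forall s, p s = q s) -> HD p t d -> HD q t d.
Proof. by move=> /funext <-. Qed.

Lemma HD_cst (c : V) t : HD (fun _ => c) t 0.
Proof. by apply: is_derive_HD; exact: is_derive_cst. Qed.

Lemma HD_add p q t dp dq : HD p t dp -> HD q t dq -> HD (fun s => p s + q s) t (dp + dq).
Proof.
move=> Hp Hq; rewrite /HD.
have -> : (fun h : R => h^-1 *: (p (h + t) + q (h + t) - (p t + q t))) =
  (fun h => h^-1 *: (p (h + t) - p t) + h^-1 *: (q (h + t) - q t)).
  by apply/funext => h; rewrite -scalerDr addrACA opprD.
exact: cvgD.
Qed.

Lemma HD_opp p t dp : HD p t dp -> HD (fun s => - p s) t (- dp).
Proof.
move=> Hp; rewrite /HD.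
have -> : (fun h : R => h^-1 *: (- p (h + t) - - p t)) =
  (fun h => - (h^-1 *: (p (h + t) - p t))).
  by apply/funext => h; rewrite -scalerN opprB opprK addrC.
exact: cvgN.
Qed.

End HD.
Section HD2.
Context {R : realType} {V : normedModType R}.
Lemma HD_scale (k : R -> R) (p : R -> V) (t : R) (dk : R) (dp : V) : HD k t dk -> HD p t dp ->
  HD (fun s => k s *: p s) t (dk *: p t + k t *: dp).
Proof.
move=> Hk Hp; rewrite /HD.
have -> : (fun h : R => h^-1 *: (k (h + t) *: p (h + t) - k t *: p t)) =
  (fun h => (h^-1 * (k (h + t) - k t)) *: p (h + t) + k t *: (h^-1 *: (p (h + t) - p t))).
  apply/funext => h; rewrite -scalerA (scalerA (k t)) mulrC -scalerA -scalerDr; congr (_ *: _).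
  by rewrite scalerBl scalerBr addrA subrK.
apply: cvgD; first exact: cvgZ Hk (HD_cont Hp).
by apply: cvgZ => //; exact: cvg_cst.
Qed.

End HD2.

Section HD3.
Context {R : realType}.

Lemma HD_comp {V W : normedModType R} (F : V -> W) (p : R -> V) t dp :
  differentiable F (p t) -> HD p t dp -> HD (F \o p) t ('d F (p t) dp).
Proof.
move=> dF Hp.
have dpt : differentiable p t by apply/derivable1_diffP; exact: HD_derivable Hp.
have dFp : differentiable (F \o p) t by exact: differentiable_comp.
have := derivable_HD ((derivable1_diffP _ _).2 dFp).
rewrite derive1E' // diff_comp // /= -derive1E' // (HD_derive1 Hp).
by [].
Qed.

Lemma HD_X (n : nat) (t : R) : HD (fun s : R => s ^+ n) t (n%:R * t ^+ n.-1).
Proof.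
have := derivable_HD (@exprn_derivable R n t 1).
by rewrite exp_derive1.
Qed.

Lemma HD_id (t : R) : HD (fun s : R => s) t 1.
Proof. by apply: is_derive_HD; exact: is_derive_id. Qed.

Lemma HD_mul (k l : R -> R) t dk dl : HD k t dk -> HD l t dl ->
  HD (fun s => k s * l s) t (dk * l t + k t * dl).
Proof. move=> Hk Hl; exact: (HD_scale Hk Hl). Qed.

End HD3.

Section IP.
Context {R : realType} {H : normedModType R} (ip : H -> H -> R).
Hypothesis Hip : is_inner_product ip.

Lemma ipC x y : ip x y = ip y x.
Proof. by case: Hip. Qed.
Lemma ipDl x y z : ip (x + y) z = ip x z + ip y z.
Proof. by case: Hip => _ h _; have := h 1 x y z; rewrite scale1r mul1r. Qed.
Lemma ip0l z : ip 0 z = 0.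
Proof.
have := ipDl 0 0 z; rewrite addr0 => /eqP; rewrite -subr_eq0 opprD addrA subrr sub0r oppr_eq0.
by move/eqP.
Qed.
Lemma ipZl a x z : ip (a *: x) z = a * ip x z.
Proof. by case: Hip => _ h _; rewrite -[a *: x]addr0 h ip0l addr0. Qed.
Lemma ipNl x z : ip (- x) z = - ip x z.
Proof. by rewrite -scaleN1r ipZl mulN1r. Qed.
Lemma ipBl x y z : ip (x - y) z = ip x z - ip y z.
Proof. by rewrite ipDl ipNl. Qed.
Lemma ipDr x y z : ip z (x + y) = ip z x + ip z y.
Proof. by rewrite ipC ipDl !(ipC z). Qed.
Lemma ipZr a x z : ip z (a *: x) = a * ip z x.
Proof. by rewrite ipC ipZl ipC. Qed.
Lemma ipNr x z : ip z (- x) = - ip z x.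
Proof. by rewrite ipC ipNl ipC. Qed.
Lemma ipBr x y z : ip z (x - y) = ip z x - ip z y.
Proof. by rewrite ipDr ipNr. Qed.
Lemma ipxx x : ip x x = `|x| ^+ 2.
Proof. by case: Hip. Qed.

Lemma ip_polar x y : ip x y = (`|x + y| ^+ 2 - `|x - y| ^+ 2) / 4.
Proof.
rewrite -!ipxx !ipDl !ipNl !ipDr !ipNr (ipC y x).
by field.
Qed.

Lemma cvg_ip {T : Type} (F : set_system T) {FF : Filter F} (a b : T -> H) (la lb : H) :
  a @ F --> la -> b @ F --> lb -> (fun x => ip (a x) (b x)) @ F --> ip la lb.
Proof.
move=> ha hb; under eq_fun do rewrite ip_polar !expr2; rewrite ip_polar !expr2.
apply: cvgM; last exact: cvg_cst.
have h1 : `|a x + b x| @[x --> F] --> `|la + lb| by apply: cvg_norm; exact: cvgD.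
have h2 : `|a x - b x| @[x --> F] --> `|la - lb| by apply: cvg_norm; exact: cvgB.
by apply: cvgB; apply: cvgM.
Qed.

Lemma HD_norm2 (p : R -> H) t dp : HD p t dp ->
  HD (fun s => `|p s| ^+ 2) t (2 * ip (p t) dp).
Proof.
move=> Hp; rewrite /HD.
have -> : (fun h : R => h^-1 *: (`|p (h + t)| ^+ 2 - `|p t| ^+ 2)) =
  (fun h => ip (h^-1 *: (p (h + t) - p t)) (p (h + t) + p t)).
  apply/funext => h; rewrite -!ipxx ipZl ipBl !ipDr.
  by rewrite [h^-1 *: _]/(_ * _) (ipC (p t) (p (h + t))); congr (_ * _); ring.
have -> : 2 * ip (p t) dp = ip dp (p t + p t).
  by rewrite ipDr ipC; ring.
apply: cvg_ip => //; apply: cvgD => //; first exact: HD_cont Hp.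
exact: cvg_cst.
Qed.

End IP.

Section Convex.
Context {R : realType} {H : normedModType R} (ip : H -> H -> R).
Hypothesis Hip : is_inner_product ip.
Variables (f : H -> R) (g : H -> H).
Hypothesis cf : convex_fun f.
Hypothesis gf : is_gradient ip f g.

Lemma grad_ineq x y : f x + ip (g x) (y - x) <= f y.
Proof.
pose p := fun s : R => x + s *: (y - x).
have Hp : HD p 0 (y - x).
  have := HD_add (HD_cst x 0) (HD_scale (HD_id 0) (HD_cst (y - x) 0)).
  move=> /HD_eqd; apply.
  by rewrite scale1r scale0r !addr0 add0r.
have p0 : p 0 = x by rewrite /p scale0r addr0.
have := HD_comp (proj1 (gf (p 0))) Hp; rewrite p0 (proj2 (gf x)) => Hq.
rewrite addrC -lerBrDr.
have := cvg_dnbhs_at_right Hq => Hr.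
apply: (ler_cvg_to Hr (cvg_cst _)).
near=> h.
have h0 : 0 < h by near: h; exact: nbhs_right_gt.
have h1 : h <= 1 by near: h; apply: nbhs_right_le; exact: ltr01.
rewrite /= addr0 p0 /p.
have := cf y x (ltW h0) h1.
have -> : h *: y + (1 - h) *: x = x + h *: (y - x).
  by rewrite scalerBl scale1r scalerBr addrCA addrA.
move=> hc.
rewrite [_ *: _]/(_ * _) ler_pdivrMl //.
by move: hc; lra.
Unshelve. all: by end_near.
Qed.

End Convex.

Lemma inf_argmin {R : realType} {H : normedModType R} (f : H -> R) z :
  is_argmin f z -> inf_f f = f z.
Proof.
move=> hz; rewrite /inf_f; apply/eqP; rewrite eq_le; apply/andP; split.
- apply: ge_inf; last by exists z.
  by exists (f z) => _ [x _ <-]; exact: hz.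
- apply: lb_le_inf; first by exists (f z), z.
  by move=> _ [x _ <-]; exact: hz.
Qed.

Lemma HD_inv {R : realType} (k : R -> R) t dk : HD k t dk -> k t != 0 ->
  HD (fun s => (k s)^-1) t (- (k t) ^- 2 * dk).
Proof.
move=> Hk k0; have [dk1 dk2] := HD_is_derive Hk.
apply: is_derive_HD; split; first exact: derivableV.
by rewrite deriveV // dk2.
Qed.

Lemma nincr_from {R : realType} (F : R -> R) a :
  (forall x, a <= x -> derivable F x 1) -> (forall x, a < x -> derive1 F x <= 0) ->
  forall x y, a <= x -> x <= y -> F y <= F x.
Proof.
move=> dF F0; apply: ler0_derive1_nincry.
- by move=> x; rewrite in_itv /= andbT => /ltW; exact: dF.
- by move=> x; rewrite in_itv /= andbT; exact: F0.
- apply: derivable_within_continuous => x; rewrite in_itv /= andbT; exact: dF.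
Qed.

Lemma nincr_HD {R : realType} (F dF : R -> R) a :
  (forall x, a <= x -> HD F x (dF x)) -> (forall x, a < x -> dF x <= 0) ->
  forall x y, a <= x -> x <= y -> F y <= F x.
Proof.
move=> HF F0; apply: nincr_from.
- by move=> x ax; exact: HD_derivable (HF x ax).
- by move=> x ax; rewrite (HD_derive1 (HF x (ltW ax))); exact: F0.
Qed.

Section NF.
Context {R : realType} {V : lmodType R} (a b c d : V).
Definition nf (x1 x2 x3 x4 : R) := x1 *: a + x2 *: b + x3 *: c + x4 *: d.
Lemma nfD x1 x2 x3 x4 y1 y2 y3 y4 :
  nf x1 x2 x3 x4 + nf y1 y2 y3 y4 = nf (x1 + y1) (x2 + y2) (x3 + y3) (x4 + y4).
Proof.
rewrite /nf !scalerDl addrACA; congr (_ + _).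
rewrite addrACA; congr (_ + _).
by rewrite addrACA.
Qed.
Lemma nfZ k x1 x2 x3 x4 : k *: nf x1 x2 x3 x4 = nf (k * x1) (k * x2) (k * x3) (k * x4).
Proof. by rewrite /nf !scalerDr !scalerA. Qed.
Lemma nfN x1 x2 x3 x4 : - nf x1 x2 x3 x4 = nf (- x1) (- x2) (- x3) (- x4).
Proof. by rewrite -scaleN1r nfZ !mulN1r. Qed.
Lemma nfa : a = nf 1 0 0 0.
Proof. by rewrite /nf !scale0r !addr0 scale1r. Qed.
Lemma nfb : b = nf 0 1 0 0.
Proof. by rewrite /nf !scale0r !addr0 add0r scale1r. Qed.
Lemma nfc : c = nf 0 0 1 0.
Proof. by rewrite /nf !scale0r !addr0 !add0r scale1r. Qed.
Lemma nfd : d = nf 0 0 0 1.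
Proof. by rewrite /nf !scale0r !add0r scale1r. Qed.
Lemma nf0 : (0 : V) = nf 0 0 0 0.
Proof. by rewrite /nf !scale0r !add0r. Qed.
Lemma nf_eq x1 x2 x3 x4 y1 y2 y3 y4 : x1 = y1 -> x2 = y2 -> x3 = y3 -> x4 = y4 ->
  nf x1 x2 x3 x4 = nf y1 y2 y3 y4.
Proof. by move=> -> -> -> ->. Qed.
End NF.

Lemma v1_id {R : realType} {V : lmodType R} (t a b : R) (x1 x2 x3 G Hs uz : V) : t != 0 ->
 x3 + ((a + 7) / t) *: x2 + (5 * (a + 1) / t ^+ 2) *: x1 + b *: Hs + G = 0 ->
 (2 * t ^+ 2.-1) *: (x2 + b *: G) + t ^+ 2 *: (x3 + (0 *: G + b *: Hs)) +
 ((0 * t + (a + 5) * 1) *: x1 + ((a + 5) * t) *: x2) + (0 *: uz + (4 * a) *: (x1 - 0))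
 = (2 * b * t - t ^+ 2) *: G.
Proof.
move=> t0 EQ.
have e3 : x3 = - (((a + 7) / t) *: x2 + (5 * (a + 1) / t ^+ 2) *: x1 + b *: Hs + G).
  by apply/eqP; rewrite -addr_eq0; apply/eqP; rewrite -EQ !addrA.
rewrite e3 !scale0r subr0 !add0r.
pose N := nf x1 x2 G Hs.
have e1 : x1 = N 1 0 0 0 by exact: nfa.
have e2 : x2 = N 0 1 0 0 by exact: nfb.
have eG : G = N 0 0 1 0 by exact: nfc.
have eH : Hs = N 0 0 0 1 by exact: nfd.
rewrite e1 e2 eG eH.
have ND : forall p1 p2 p3 p4 q1 q2 q3 q4, N p1 p2 p3 p4 + N q1 q2 q3 q4 = N (p1 + q1) (p2 + q2) (p3 + q3) (p4 + q4).
  by move=> *; exact: nfD.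
have NZ : forall k p1 p2 p3 p4, k *: N p1 p2 p3 p4 = N (k * p1) (k * p2) (k * p3) (k * p4).
  by move=> *; exact: nfZ.
have NN : forall p1 p2 p3 p4, - N p1 p2 p3 p4 = N (- p1) (- p2) (- p3) (- p4).
  by move=> *; exact: nfN.
rewrite !(NZ, ND, NN).
apply: nf_eq; by field.
Qed.


Section Main.
Context {R : realType} {H : completeNormedModType R} (ip : H -> H -> R) (f : H -> R)
  (g : H -> H) (t0 alpha beta : R) (u : R -> H) (z : H).
Hypotheses (Hip : is_inner_product ip) (cf : convex_fun f) (C2 : C2_with_gradient ip f g)
  (ht0 : 0 < t0) (ha : 3 < alpha) (hb : 0 <= beta)
  (sol : toges_vh_solution g alpha beta t0 u) (hz : is_argmin f z).

Local Notation u1 := (derive1 u).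
Local Notation u2 := (derive1 (derive1 u)).
Local Notation u3 := (derive1 (derive1 (derive1 u))).
Local Notation w := (wpt u).

Let gf : is_gradient ip f g := C2.1.
Let dg : forall x, differentiable g x := C2.2.1.

Definition w1 t := (5 / 4) *: u1 t + (t / 4) *: u2 t.

Lemma solt t : t0 <= t -> [/\ HD u t (u1 t), HD u1 t (u2 t), HD u2 t (u3 t) &
   u3 t + ((alpha + 7) / t) *: u2 t + ((5 * (alpha + 1)) / t ^+ 2) *: u1 t
        + beta *: 'd g (w t) (w1 t) + g (w t) = 0].
Proof.
move=> /sol [d1 d2 d3 _ E].
rewrite /derive1n /= /hessian /w1 in d3 E.
split; [exact: derivable_HD|exact: derivable_HD|exact: derivable_HD|exact: E].
Qed.

Lemma Hw t : t0 <= t -> HD w t (w1 t).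
Proof.
move=> /solt [Hu Hu1 _ _].
have := HD_add Hu (HD_scale (HD_mul (HD_id t) (HD_cst (4^-1 : R) t)) Hu1).
move=> /HD_eqd; apply.
rewrite /w1 mul1r mulr0 addr0 addrA; congr (_ + _).
by rewrite -{1}(scale1r (u1 t)) -scalerDl; congr (_ *: _); field.
Qed.

Definition vv s := s ^+ 2 *: (u2 s + beta *: g (w s)) + ((alpha + 5) * s) *: u1 s
   + (4 * alpha) *: (u s - z).

Lemma Hv t : t0 <= t -> HD vv t ((2 * beta * t - t ^+ 2) *: g (w t)).
Proof.
move=> t0t; have [Hu Hu1 Hu2 EQ] := solt t0t.
have := HD_add (HD_add (HD_scale (@HD_X R 2 t) (HD_add Hu2 (HD_scale (HD_cst beta t) (HD_comp (dg (w t)) (Hw t0t)))))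
   (HD_scale (HD_mul (HD_cst (alpha + 5) t) (HD_id t)) Hu1))
   (HD_scale (HD_cst (4 * alpha) t) (HD_add Hu (HD_opp (HD_cst z t)))).
move=> X; apply: (HD_eqd X).
apply: v1_id => //; apply: lt0r_neq0; exact: lt_le_trans ht0 t0t.
Qed.

Let m := inf_f f.
Let mE : m = f z := inf_argmin hz.

Definition dE t := 4 * (3 * t ^+ 2 - 4 * beta * t) * (f (w t) - m)
  + 4 * (t ^+ 3 - 2 * beta * t ^+ 2) * ip (g (w t)) (w1 t)
  + (2 * beta * t - t ^+ 2) * ip (vv t) (g (w t)).

Lemma HE t : t0 <= t -> HD (energy f g alpha beta z u) t (dE t).
Proof.
move=> t0t.
have := HD_add (HD_mul (HD_mul (HD_cst (4:R) t) (HD_add (@HD_X R 3 t) (HD_opp (HD_mul (HD_cst (2 * beta) t) (@HD_X R 2 t)))))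
   (HD_add (HD_comp (proj1 (gf (w t))) (Hw t0t)) (HD_opp (HD_cst m t))))
   (HD_mul (HD_cst (2^-1:R) t) (HD_norm2 Hip (Hv t0t))).
move=> X; apply: (HD_eqd X).
rewrite /dE (proj2 (gf _)) /= (ipZr Hip).
by field.
Qed.

Definition t1 := Num.max t0 (2 * beta * (alpha - 2) / (alpha - 3)).

Lemma t1P t : t1 <= t -> [/\ t0 <= t, 0 < t & 0 <= t * (alpha - 3) - 2 * beta * (alpha - 2)].
Proof.
rewrite /t1 ge_max => /andP[h0 h1]; split => //; first exact: lt_le_trans ht0 h0.
by rewrite subr_ge0 -ler_pdivrMr // subr_gt0.
Qed.

Lemma dE_le t : t1 <= t -> dE t <= - (beta / (alpha - 2)) * (t ^+ 4 * `|g (w t)| ^+ 2).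
Proof.
move=> /t1P [t0t tp Kp].
have gi := grad_ineq cf gf (w t) z.
have F0 : 0 <= f (w t) - m by rewrite mE subr_ge0; exact: hz.
rewrite -mE in gi.
rewrite /dE /vv /w1 (ipC Hip (_ + _)).
move: F0 gi; set G := g (w t); set F := f (w t) => F0 gi.
rewrite /wpt in gi.
rewrite !(ipDr Hip, ipNr Hip, ipZr Hip) (ipxx Hip) in gi *.
set a := ip G (u t) in gi *; set b := ip G z in gi *; set c := ip G (u1 t) in gi *; set d := ip G (u2 t) in gi *.
set N := `|G| ^+ 2.
have N0 : 0 <= N by rewrite /N exprn_ge0.
set K := t * (alpha - 3) - 2 * beta * (alpha - 2) in Kp *.
have a2 : 0 < alpha - 2 by move: ha; lra.
have a3 : 0 < alpha - 3 by move: ha; lra.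
have t2b : 0 <= t - 2 * beta.
  have e : (t - 2 * beta) * (alpha - 3) = K + 2 * beta by rewrite /K; ring.
  by rewrite -(pmulr_lge0 _ a3) e; move: hb; lra.
set P := a - b + t / 4 * c.
have PF : 0 <= P - (F - m) by rewrite /P; move: gi; lra.
have Hid : 4 * (3 * t ^+ 2 - 4 * beta * t) * (F - m) +
  4 * (t ^+ 3 - 2 * beta * t ^+ 2) * (5 / 4 * c + t / 4 * d) +
  (2 * beta * t - t ^+ 2) *
  (t ^+ 2 * (d + beta * N) + (alpha + 5) * t * c + 4 * alpha * (a - b)) =
  - (beta / (alpha - 2)) * (t ^+ 4 * N) - (4 * t * (F - m) * K
     + 4 * alpha * t * (t - 2 * beta) * (P - (F - m)) + beta * t ^+ 3 * N * K / (alpha - 2)).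
  rewrite /P /K; field; move: a2; lra.
rewrite Hid; suff Y0 : 0 <= 4 * t * (F - m) * K
     + 4 * alpha * t * (t - 2 * beta) * (P - (F - m)) + beta * t ^+ 3 * N * K / (alpha - 2) by lra.
have tp' : 0 <= t by exact: ltW.
have al0 : 0 <= alpha by move: ha; lra.
apply: addr_ge0; first apply: addr_ge0.
- by rewrite !mulr_ge0.
- by rewrite !mulr_ge0.
- by rewrite divr_ge0 ?(ltW a2) // !mulr_ge0 // exprn_ge0.
Qed.

Let E := energy f g alpha beta z u.

Lemma t1t0 : t0 <= t1.
Proof. by rewrite /t1 le_max lexx. Qed.

Lemma E_nincr s t : t1 <= s -> s <= t -> E t <= E s.
Proof.
move=> h1 h2; apply: (@nincr_HD _ E dE t1) => //.
- by move=> x hx; apply: HE; exact: le_trans t1t0 hx.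
- move=> x hx; apply: le_trans (dE_le (ltW hx)) _.
  have [_ xp _] := t1P (ltW hx).
  have a2 : 0 <= alpha - 2 by move: ha; lra.
  rewrite mulNr oppr_le0; apply: mulr_ge0; first exact: divr_ge0.
  by rewrite mulr_ge0 // exprn_ge0 // ltW.
Qed.

Lemma Fw_bound t : t1 <= t -> f (w t) - m <= (alpha - 2) * E t1 / (4 * t ^+ 3).
Proof.
move=> ht; have [t0t tp Kp] := t1P ht.
have F0 : 0 <= f (w t) - m by rewrite mE subr_ge0; exact: hz.
have Et := E_nincr (lexx t1) ht.
have a2 : 0 < alpha - 2 by move: ha; lra.
have nv : 0 <= 2^-1 * `|vv t| ^+ 2 by rewrite mulr_ge0 // exprn_ge0.
have EtE : E t = 4 * (t ^+ 3 - 2 * beta * t ^+ 2) * (f (w t) - m) + 2^-1 * `|vv t| ^+ 2 by [].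
have t3 : 0 < 4 * t ^+ 3 by rewrite mulr_gt0 // exprn_gt0.
rewrite ler_pdivlMr //.
have e : (alpha - 2) * (4 * (t ^+ 3 - 2 * beta * t ^+ 2) * (f (w t) - m)) - (f (w t) - m) * (4 * t ^+ 3)
   = 4 * t ^+ 2 * (t * (alpha - 3) - 2 * beta * (alpha - 2)) * (f (w t) - m) by ring.
have e0 : 0 <= 4 * t ^+ 2 * (t * (alpha - 3) - 2 * beta * (alpha - 2)) * (f (w t) - m).
  by rewrite !mulr_ge0 // ?exprn_ge0 // ltW.
have h1 : (alpha - 2) * (4 * (t ^+ 3 - 2 * beta * t ^+ 2) * (f (w t) - m)) <= (alpha - 2) * E t.
  by rewrite ler_pM2l // EtE lerDl.
have h2 : (alpha - 2) * E t <= (alpha - 2) * E t1 by rewrite ler_pM2l.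
move: e e0 h1 h2; lra.
Qed.

Lemma gu_ineq t : t / 4 * ip (g (u t)) (u1 t) <= f (w t) - f (u t).
Proof.
have gi := grad_ineq cf gf (u t) (w t).
rewrite /wpt (addrC (u t)) addrK (ipZr Hip) in gi.
move: gi; rewrite /wpt addrC; lra.
Qed.

Lemma part_ib s t : t1 <= s -> s <= t ->
  t ^+ 4 * (f (u t) - m) - (alpha - 2) * E t1 * t <= s ^+ 4 * (f (u s) - m) - (alpha - 2) * E t1 * s.
Proof.
move=> h1 h2.
pose KE := (alpha - 2) * E t1.
apply: (@nincr_HD _ (fun s => s ^+ 4 * (f (u s) - m) - KE * s)
   (fun t => 4 * t ^+ 3 * (f (u t) - m) + t ^+ 4 * ip (g (u t)) (u1 t) - KE) t1) => //.
- move=> x hx; have [Hu _ _ _] := solt (le_trans t1t0 hx).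
  have := HD_add (HD_mul (@HD_X R 4 x) (HD_add (HD_comp (proj1 (gf (u x))) Hu) (HD_opp (HD_cst m x))))
     (HD_opp (HD_mul (HD_cst KE x) (HD_id x))).
  move=> X; apply: (HD_eqd X).
  rewrite (proj2 (gf _)) /=; by field.
- move=> x hx; have [_ xp _] := t1P (ltW hx).
  have hw := Fw_bound (ltW hx).
  have hg := gu_ineq x.
  have m0 : m <= f (u x) by rewrite mE; exact: hz.
  have x3 : 0 < 4 * x ^+ 3 by rewrite mulr_gt0 // exprn_gt0.
  rewrite ler_pdivlMr // in hw.
  have hg' : 4 * x ^+ 3 * (x / 4 * ip (g (u x)) (u1 x)) <= 4 * x ^+ 3 * (f (w x) - f (u x)).
    by rewrite ler_pM2l.
  have e : 4 * x ^+ 3 * (x / 4 * ip (g (u x)) (u1 x)) = x ^+ 4 * ip (g (u x)) (u1 x) by field.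
  rewrite -e; rewrite /KE; move: hg' hw; set A := 4 * x ^+ 3; set B := _ * ip _ _.
  rewrite mulrC; move=> hg' hw.
  have : A * (f (w x) - m) <= (alpha - 2) * E t1 by rewrite mulrC.
  have : A * (f (w x) - f (u x)) = A * (f (w x) - m) - A * (f (u x) - m) by ring.
  lra.
Qed.

Lemma part_ic s t : t1 <= s -> s <= t ->
  f (u t) + (alpha - 2) * E t1 / (3 * t ^+ 3) <= f (u s) + (alpha - 2) * E t1 / (3 * s ^+ 3).
Proof.
move=> h1 h2.
pose KE := (alpha - 2) * E t1.
apply: (@nincr_HD _ (fun s => f (u s) + KE / (3 * s ^+ 3))
   (fun t => ip (g (u t)) (u1 t) - KE / t ^+ 4) t1) => //.
- move=> x hx; have [Hu _ _ _] := solt (le_trans t1t0 hx).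
  have [_ xp _] := t1P hx.
  have nz : 3 * x ^+ 3 != 0 by rewrite mulf_neq0 // expf_neq0 // gt_eqF.
  have := HD_add (HD_comp (proj1 (gf (u x))) Hu)
     (HD_mul (HD_cst KE x) (HD_inv (HD_mul (HD_cst (3:R) x) (@HD_X R 3 x)) nz)).
  move=> X; apply: (HD_eqd X).
  rewrite (proj2 (gf _)) /=; field; by rewrite gt_eqF.
- move=> x hx; have [_ xp _] := t1P (ltW hx).
  have hw := Fw_bound (ltW hx).
  have hg := gu_ineq x.
  have m0 : m <= f (u x) by rewrite mE; exact: hz.
  rewrite subr_le0.
  have x4 : 0 < x ^+ 4 by rewrite exprn_gt0.
  have e : KE / x ^+ 4 = 4 / x * (KE / (4 * x ^+ 3)) by rewrite /KE; field; rewrite gt_eqF.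
  have e2 : ip (g (u x)) (u1 x) = 4 / x * (x / 4 * ip (g (u x)) (u1 x)) by field; rewrite gt_eqF.
  rewrite e e2 ler_pM2l ?divr_gt0 //.
  rewrite /KE; lra.
Qed.

Definition hh s := s ^+ 4 * `|g (w s)| ^+ 2.

Lemma hh_cont x : t0 <= x -> {for x, continuous hh}.
Proof.
move=> t0x; have Hwx := Hw t0x.
have cw : {for x, continuous w}.
  exact: differentiable_continuous ((derivable1_diffP _ _).1 (HD_derivable Hwx)).
have cg : {for w x, continuous g} := differentiable_continuous (dg _).
have cgw : {for x, continuous (g \o w)} := continuous_comp cw cg.
have cn : (fun s => `|g (w s)|) @ x --> `|g (w x)| by apply: cvg_norm; exact: cgw.
have cn2 : (fun s => `|g (w s)| ^+ 2) @ x --> `|g (w x)| ^+ 2.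
  by under eq_fun do rewrite expr2; rewrite expr2; exact: cvgM.
have c4 : (fun s : R => s ^+ 4) @ x --> x ^+ 4 by exact: exprn_continuous.
exact: cvgM c4 cn2.
Qed.

Lemma hh_ge0 x : 0 <= x -> 0 <= hh x.
Proof. by move=> x0; rewrite /hh mulr_ge0 // ?exprn_ge0. Qed.

Lemma t2b t : t1 <= t -> 0 <= t - 2 * beta.
Proof.
move=> /t1P [_ tp Kp].
have a3 : 0 < alpha - 3 by move: ha; lra.
have e : (t - 2 * beta) * (alpha - 3) = (t * (alpha - 3) - 2 * beta * (alpha - 2)) + 2 * beta by ring.
by rewrite -(pmulr_lge0 _ a3) e; move: hb Kp; lra.
Qed.

Lemma E_ge0 t : t1 <= t -> 0 <= E t.
Proof.
move=> ht; have [_ tp _] := t1P ht; have tb := t2b ht.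
have F0 : 0 <= f (w t) - m by rewrite mE subr_ge0; exact: hz.
have EtE : E t = 4 * (t ^+ 2 * (t - 2 * beta)) * (f (w t) - m) + 2^-1 * `|vv t| ^+ 2.
  by rewrite /E /energy; congr (_ * _ * _ + _); ring.
rewrite EtE; apply: addr_ge0; last by rewrite mulr_ge0 // exprn_ge0.
apply: mulr_ge0 => //; apply: mulr_ge0 => //; apply: mulr_ge0 => //.
by rewrite exprn_ge0 // ltW.
Qed.

Let mu := @lebesgue_measure R.

Lemma hh_int T : t1 <= T -> mu.-integrable `[t1, T] (EFin \o hh).
Proof.
move=> hT; apply: continuous_compact_integrable; first exact: segment_compact.
apply: continuous_in_subspaceT => x; rewrite inE /= in_itv /= => /andP[h1 _].
exact: hh_cont (le_trans t1t0 h1).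
Qed.

Lemma int_bound T : 0 < beta -> t1 <= T ->
  \int[mu]_(x in `[t1, T]) hh x <= (alpha - 2) * E t1 / beta.
Proof.
move=> bp hT.
have a2 : 0 < alpha - 2 by move: ha; lra.
pose c := beta / (alpha - 2).
have cp : 0 < c by rewrite divr_gt0.
pose Phi x := \int[mu]_(s in `[t1, x]) hh s.
have Phi1 : Phi t1 = 0 by rewrite /Phi set_itv1 Rintegral_set1.
suff : E T + c * Phi T <= E t1 + c * Phi t1.
  rewrite Phi1 mulr0 addr0 => h.
  have := E_ge0 hT => h0.
  have : c * Phi T <= E t1 by lra.
  rewrite mulrC -ler_pdivlMr // /c invf_div mulrA.
  by rewrite [E t1 * _]mulrC.
case: (ltgtP t1 T) hT => [tT _| //|<- _]; last by rewrite lexx.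
have iT := hh_int (ltW tT).
apply: (@ler0_derive1_le_cc _ (fun x => E x + c * Phi x) t1 T).
- move=> x; rewrite in_itv /= => /andP[h1 h2].
  have [dP eP] := continuous_FTC1_closed h2 iT h1 (hh_cont (le_trans t1t0 (ltW h1))).
  apply: derivableD; first exact: HD_derivable (HE (le_trans t1t0 (ltW h1))).
  by apply: derivableM => //; exact: derivable_cst.
- move=> x; rewrite in_itv /= => /andP[h1 h2].
  have [dP eP] := continuous_FTC1_closed h2 iT h1 (hh_cont (le_trans t1t0 (ltW h1))).
  have HP : HD Phi x (hh x) by rewrite -eP; exact: derivable_HD.
  have := HD_add (HE (le_trans t1t0 (ltW h1))) (HD_mul (HD_cst c x) HP).
  move=> /HD_derive1 ->.
  have := dE_le (ltW h1); rewrite mul0r add0r /hh /c.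
  rewrite -/(hh x); move=> h; move: h; rewrite /hh; lra.
- have cE : {within `[t1, T], continuous E}.
    apply: derivable_within_continuous => x; rewrite in_itv /= => /andP[h1 _].
    exact: HD_derivable (HE (le_trans t1t0 h1)).
  have cP : {within `[t1, T], continuous Phi} := parameterized_integral_continuous (ltW tT) iT.
  move=> x; apply: continuousD; first exact: cE.
  apply: continuousM; first exact: cst_continuous.
  exact: cP.
- by rewrite in_itv /= lexx ltW.
- by rewrite in_itv /= lexx ltW.
- exact: ltW.
Qed.

Lemma part_ii : 0 < beta ->
  (\int[mu]_(x in `[t1, +oo[) (hh x)%:E <= ((alpha - 2) * E t1 / beta)%:E)%E.
Proof.
move=> bp.
have tp : 0 < t1 by have [] := t1P (lexx t1).
rewrite itv_bndy_bigcup_BRight.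
apply: (cvge_le _ (ge0_nondecreasing_set_cvg_integral _ _ _ _)).
- apply: nearW => n /=.
  have hn : t1 <= t1 + n%:R by rewrite lerDl.
  have iT := hh_int hn.
  rewrite -(fineK (integrable_fin_num _ iT)) ?lee_fin; last exact: measurable_itv.
  exact: int_bound.
- move=> a b ab; rewrite subsetEset; apply: subset_itvl; rewrite bnd_simp lerD2l ler_nat.
  exact: ab.
- by move=> i; exact: measurable_itv.
- move=> i; have hn : t1 <= t1 + i%:R by rewrite lerDl.
  by have /integrableP[] := hh_int hn.
- move=> i x; rewrite /= in_itv /= => /andP[h _].
  by rewrite lee_fin hh_ge0 // ltW // (lt_le_trans tp h).
Qed.

Lemma part_ib' t : t1 <= t -> f (u t) - m <=
  (t1 ^+ 4 * (f (u t1) - m) - (alpha - 2) * E t1 * t1) / t ^+ 4 + (alpha - 2) * E t1 / t ^+ 3.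
Proof.
move=> ht; have [_ tp _] := t1P ht.
have h := part_ib (lexx t1) ht.
have t4 : 0 < t ^+ 4 by rewrite exprn_gt0.
have -> : (alpha - 2) * E t1 / t ^+ 3 = (alpha - 2) * E t1 * t / t ^+ 4.
  by field; rewrite gt_eqF.
rewrite -mulrDl ler_pdivlMr // mulrC.
move: h; lra.
Qed.

End Main.

Unset Implicit Arguments.
Theorem theorem3p1 (R : realType) (H : completeNormedModType R)
  (ip : H -> H -> R) (f : H -> R) (g : H -> H)
  (t0 alpha beta : R) (u : R -> H) (z : H) :
  is_inner_product ip ->
  convex_fun f -> C2_with_gradient ip f g ->
  (exists x, is_argmin f x) ->
  0 < t0 -> 3 < alpha -> 0 <= beta ->
  toges_vh_solution g alpha beta t0 u ->
  is_argmin f z ->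
  let E := energy f g alpha beta z u in
  let t1 := Num.max t0 (2 * beta * (alpha - 2) / (alpha - 3)) in
  (* (i) *)
  ((forall t, t1 <= t ->
      f (wpt u t) - inf_f f <= (alpha - 2) * E t1 / (4 * t ^+ 3)) /\
   (forall t, t1 <= t ->
      f (u t) - inf_f f <=
        (t1 ^+ 4 * (f (u t1) - inf_f f) - (alpha - 2) * E t1 * t1) / t ^+ 4
        + (alpha - 2) * E t1 / t ^+ 3) /\
   (forall s t, t1 <= s -> s <= t ->
      f (u t) + (alpha - 2) * E t1 / (3 * t ^+ 3)
      <= f (u s) + (alpha - 2) * E t1 / (3 * s ^+ 3))) /\
  (* (ii) *)
  (0 < beta ->
     (\int[lebesgue_measure]_(t in `[t1, +oo[)
         ((t ^+ 4 * `| g (wpt u t) | ^+ 2)%:E)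
      <= ((alpha - 2) * E t1 / beta)%:E)%E).
Proof.
move=> Hip cf C2 _ ht0 ha hb sol hz E t1.
split; [split; [|split]|].
- move=> t ht; exact: (Fw_bound Hip cf C2 ht0 ha hb sol hz ht).
- move=> t ht; exact: (part_ib' Hip cf C2 ht0 ha hb sol hz ht).
- move=> s t hs hst; exact: (part_ic Hip cf C2 ht0 ha hb sol hz hs hst).
- move=> bp; exact: (part_ii Hip cf C2 ht0 ha hb sol hz bp).
Qed.
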